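(* Let $C$ be an $\mathcal A^w_n$-module and let $y(C)=C\otimes R[y_1,\dots,y_n]$ with differential $D=d+\sum_i\xi_iy_i$. Then $\mathsf e:=u+\sum_{i=1}^n(x_i+x'_{w(i)})\,\partial/\partial y_i$ is a chain endomorphism of $y(C)$ of bidegree $(-2,4)$, i.e. $[D,\mathsf e]=0$.
   Context: $R$ is a commutative ring, $R^e_n=R[x_1,\dots,x_n,x'_1,\dots,x'_n]$ with all variables of quantum degree $2$, and $B_n=R^e_n/(\sum_ix_i^k-\sum_i(x'_i)^k,\ k=1,\dots,n)$. For $w\in\mathfrak S_n$, $\mathcal A^w_n$ is the graded-commutative $B_n$-algebra freely generated by $\xi_1,\dots,\xi_n$ of (homological, quantum) degree $(-1,2)$ and $u$ of degree $(-2,4)$ modulo the squares $\xi_i^2$, with the derivation $d$ of degree $1$ given by $d(B_n)=0$, $d(\xi_i)=x_i-x'_{w(i)}$, $d(u)=\sum_i(x_i+x'_{w(i)})\xi_i$. An $\mathcal A^w_n$-module is a bounded bigraded chain complex $(C,d)$ (in a graded $R^e_n$-linear additive category) with an action of $\mathcal A^w_n$ such that for each $a\in\mathcal A^w_n$ the action of $d(a)$ equals $[d,a]=da-(-1)^{|a|}ad$. $y(C)$ is the formal tensor product: $(y(C))^p=\bigoplus_{k\ge0}\bigoplus_{|\alpha|=k}C^{p-2k}y^\alpha$, each $y_i$ of bidegree $(2,-2)$; $\partial/\partial y_i$ sends $C^py^\alpha$ to $C^py^{\alpha-e_i}$ by multiplication by $\alpha_i$. Supercommutator $[a,b]=ab-(-1)^{|a||b|}ba$.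 *)

(* Defs.v *)
From HB Require Import structures.
From mathcomp Require Import all_boot all_order all_algebra all_fingroup.
From mathcomp Require Import mpoly.
Set Implicit Arguments. Unset Strict Implicit. Unset Printing Implicit Defensive.
Import Order.TTheory GRing.Theory Num.Theory.
Local Open Scope ring_scope.

(* R^e_n = R[x_1..x_n, x'_1..x'_n] is {mpoly R[n + n]}; x_i is the variable
   lshift n i, x'_i is the variable rshift n i. *)
Section Defs.
Variables (R : comRingType) (n : nat).

Definition xv (i : 'I_n) : {mpoly R[n + n]} := 'X_(lshift n i).
Definition xv' (i : 'I_n) : {mpoly R[n + n]} := 'X_(rshift n i).

(* A bounded bigraded complex C in a graded R^e_n-linear (pre)additive
   category, presented through the full subcategory on its terms C^j
   (j : int): Hom j k = Hom(C^j, C^k), an R^e_n-module, with R^e_n-bilinear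
   associative composition, identities ide j j (ide j k = 0 for j <> k, so
   that a "family" forall j k, Hom j k is a matrix of components), and a
   quantum grading predicate qdeg f q ("f is homogeneous of quantum degree q")
   compatible with composition and with x_i, x'_i of quantum degree 2.
   Boundedness: C^j is a zero object (id = 0) outside [lo, lo + len]. *)
Record gcx := GCx {
  Hom : int -> int -> lmodType {mpoly R[n + n]};
  comp : forall j k l : int, Hom k l -> Hom j k -> Hom j l;
  ide : forall j k : int, Hom j k;
  qdeg : forall j k : int, Hom j k -> int -> Prop;
  lo : int;
  len : nat;
  comp_assoc : forall j k l m (f : Hom l m) (g : Hom k l) (h : Hom j k),
    comp f (comp g h) = comp (comp f g) h;
  comp_ide_l : forall j k (f : Hom j k), comp (ide k k) f = f;
  comp_ide_r : forall j k (f : Hom j k), comp f (ide j j) = f;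
  ide_off : forall j k, j != k -> ide j k = 0;
  compDl : forall j k l (f f' : Hom k l) (g : Hom j k),
    comp (f + f') g = comp f g + comp f' g;
  compDr : forall j k l (f : Hom k l) (g g' : Hom j k),
    comp f (g + g') = comp f g + comp f g';
  compZl : forall j k l (r : {mpoly R[n + n]}) (f : Hom k l) (g : Hom j k),
    comp (r *: f) g = r *: comp f g;
  compZr : forall j k l (r : {mpoly R[n + n]}) (f : Hom k l) (g : Hom j k),
    comp f (r *: g) = r *: comp f g;
  qdeg0 : forall j k q, qdeg (0 : Hom j k) q;
  qdegD : forall j k (f g : Hom j k) q, qdeg f q -> qdeg g q -> qdeg (f + g) q;
  qdegN : forall j k (f : Hom j k) q, qdeg f q -> qdeg (- f) q;
  qdeg_comp : forall j k l (f : Hom k l) (g : Hom j k) q q',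
    qdeg f q -> qdeg g q' -> qdeg (comp f g) (q + q');
  qdeg_ide : forall j k, qdeg (ide j k) 0;
  qdegX : forall j k (f : Hom j k) q (i : 'I_(n + n)),
    qdeg f q -> qdeg ('X_i *: f) (q + 2);
  qdegC : forall j k (f : Hom j k) q (c : R), qdeg f q -> qdeg (c%:MP *: f) q;
  bounded : forall j : int, (j < lo) || (lo + len%:Z < j) -> ide j j = 0
}.

Definition cmap (C : gcx) := forall j k : int, Hom C j k.

Definition krange (C : gcx) : seq int :=
  [seq lo C + i%:Z | i <- iota 0 (len C).+1].

Definition ccomp (C : gcx) (F G : cmap C) : cmap C :=
  fun j l => \sum_(k <- krange C) comp (F k l) (G j k).

Definition chom (C : gcx) (F : cmap C) (m q : int) : Prop :=
  forall j k, (k != j + m -> F j k = 0) /\ qdeg (F j k) q.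

(* An A^w_n-module: a bounded complex (C, d) with the actions of the
   generators xi_i (bidegree (-1,2)) and u (bidegree (-2,4)) satisfying the
   defining relations of A^w_n (graded commutativity, xi_i^2 = 0, B_n acting
   through the R^e_n-linear structure) and [d, a] = d(a) on generators. *)
Record amod (w : {perm 'I_n}) := AMod {
  cx_of : gcx;
  dC : cmap cx_of;
  xiC : 'I_n -> cmap cx_of;
  uC : cmap cx_of;
  dC_hom : chom dC 1 0;
  xiC_hom : forall i, chom (xiC i) (-1) 2;
  uC_hom : chom uC (-2) 4;
  dC2 : forall j k, ccomp dC dC j k = 0;
  xiC_sq : forall i j k, ccomp (xiC i) (xiC i) j k = 0;
  xiC_anti : forall i i' j k,
    ccomp (xiC i) (xiC i') j k = - ccomp (xiC i') (xiC i) j k;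
  xiC_u : forall i j k, ccomp (xiC i) uC j k = ccomp uC (xiC i) j k;
  Bn_rel : forall m : nat, (0 < m <= n)%N -> forall j k,
    (\sum_i xv i ^+ m - \sum_i xv' i ^+ m) *: ide cx_of j k = 0;
  d_xi : forall i j k,
    ccomp dC (xiC i) j k + ccomp (xiC i) dC j k
    = (xv i - xv' (w i)) *: ide cx_of j k;
  d_u : forall j k,
    ccomp dC uC j k - ccomp uC dC j k
    = \sum_i (xv i + xv' (w i)) *: xiC i j k
}.

Definition mi := {ffun 'I_n -> nat}.
Definition msz (a : mi) : nat := (\sum_i a i)%N.
Definition munit (i : 'I_n) : mi := [ffun j => nat_of_bool (j == i)].
Definition madd (a b : mi) : mi := [ffun j => (a j + b j)%N].
Definition membed N (b : {ffun 'I_n -> 'I_N}) : mi := [ffun i => nat_of_ord (b i)].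

(* maps of y(C) = (+)_alpha C y^alpha, as matrices: F j k a b is the component
   C^j y^b -> C^k y^a (C^j y^b sits in bidegree shifted by (2|b|, -2|b|)). *)
Definition ymap (C : gcx) := forall (j k : int) (a b : mi), Hom C j k.

Definition yhom (C : gcx) (F : ymap C) (m q : int) : Prop :=
  forall j k a b,
    (k + 2 * (msz a)%:Z != j + 2 * (msz b)%:Z + m -> F j k a b = 0) /\
    qdeg (F j k a b) (q - 2 * (msz b)%:Z + 2 * (msz a)%:Z).

(* composition F o G of maps of y(C), G homogeneous of homological degree m:
   the intermediate multi-index b satisfies |b| <= |c| + |len + m| for every
   nonzero term, so the (column-finite) matrix product is this finite sum. *)
Definition ybound (C : gcx) (m : int) (c : mi) : nat :=
  (msz c + `|(len C)%:Z + m|).+1.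

Definition ycomp (C : gcx) (m : int) (F G : ymap C) : ymap C :=
  fun j l a c => \sum_(k <- krange C)
    \sum_(b : {ffun 'I_n -> 'I_(ybound C m c)})
      comp (F k l a (membed b)) (G j k (membed b) c).

Definition ysupcomm (C : gcx) (mF mG : int) (F G : ymap C) : ymap C :=
  fun j l a c => ycomp mG F G j l a c
    - ((-1) ^+ `|mF * mG|) *: ycomp mF G F j l a c.

Section YOps.
Variables (w : {perm 'I_n}) (M : amod w).

(* D = d + sum_i xi_i y_i *)
Definition yD : ymap (cx_of M) := fun j k a b =>
  (if a == b then dC M j k else 0)
  + \sum_i (if a == madd b (munit i) then xiC M i j k else 0).

(* e = u + sum_i (x_i + x'_{w(i)}) d/dy_i *)
Definition ye : ymap (cx_of M) := fun j k a b =>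
  (if a == b then uC M j k else 0)
  + \sum_i (if b == madd a (munit i)
            then ((xv i + xv' (w i)) *: ide (cx_of M) j k) *+ b i else 0).
End YOps.

End Defs.

(* Main.v *)
Require Import Defs.
From HB Require Import structures.
From mathcomp Require Import all_boot all_order all_algebra all_fingroup.
From mathcomp Require Import mpoly.
From mathcomp Require Import zify ring.
Set Implicit Arguments. Unset Strict Implicit. Unset Printing Implicit Defensive.
Import Order.TTheory GRing.Theory Num.Theory.
Local Open Scope ring_scope.


Section Aux.
Variables (R : comRingType) (n : nat) (C : gcx R n).
Local Notation H := (Defs.Hom C).
Local Notation cmp := (@Defs.comp _ _ C _ _ _).

Lemma comp0l j k l (g : H j k) : cmp (0 : H k l) g = 0.
Proof. by apply: (addrI (cmp 0 g)); rewrite -compDl !addr0. Qed.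
Lemma comp0r j k l (f : H k l) : cmp f (0 : H j k) = 0.
Proof. by apply: (addrI (cmp f 0)); rewrite -compDr !addr0. Qed.
Lemma comp_suml j k l I (r : seq I) (P : pred I) (F : I -> H k l) (g : H j k) :
  cmp (\sum_(i <- r | P i) F i) g = \sum_(i <- r | P i) cmp (F i) g.
Proof.
elim/big_rec2: _ => [|i x y _ <-]; first exact: comp0l.
by rewrite compDl.
Qed.
Lemma comp_sumr j k l I (r : seq I) (P : pred I) (F : I -> H j k) (f : H k l) :
  cmp f (\sum_(i <- r | P i) F i) = \sum_(i <- r | P i) cmp f (F i).
Proof.
elim/big_rec2: _ => [|i x y _ <-]; first exact: comp0r.
by rewrite compDr.
Qed.
Lemma comp_ifl j k l (b : bool) (f : H k l) (g : H j k) :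
  cmp (if b then f else 0) g = if b then cmp f g else 0.
Proof. by case: b; rewrite ?comp0l. Qed.
Lemma comp_ifr j k l (b : bool) (f : H k l) (g : H j k) :
  cmp f (if b then g else 0) = if b then cmp f g else 0.
Proof. by case: b; rewrite ?comp0r. Qed.
Lemma compMnl j k l m (f : H k l) (g : H j k) : cmp (f *+ m) g = cmp f g *+ m.
Proof. elim: m => [|m IH]; first by rewrite !mulr0n comp0l. by rewrite !mulrS compDl IH. Qed.
Lemma compMnr j k l m (f : H k l) (g : H j k) : cmp f (g *+ m) = cmp f g *+ m.
Proof. elim: m => [|m IH]; first by rewrite !mulr0n comp0r. by rewrite !mulrS compDr IH. Qed.
Lemma qdegMn j k (f : H j k) q m : qdeg f q -> qdeg (f *+ m) q.
Proof. move=> h; elim: m => [|m IH]; first by rewrite mulr0n; apply: qdeg0. by rewrite mulrS; apply: qdegD. Qed.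
Lemma qdeg_sum j k I (r : seq I) (P : pred I) (F : I -> H j k) q :
  (forall i, P i -> qdeg (F i) q) -> qdeg (\sum_(i <- r | P i) F i) q.
Proof. move=> h; elim/big_rec: _ => [|i x Pi hx]; [exact: qdeg0| exact: qdegD (h _ Pi) hx]. Qed.

Lemma krange_uniq : uniq (krange C).
Proof.
rewrite map_inj_uniq ?iota_uniq // => x y /addrI [] //.
Qed.

Lemma mem_krange j : (j \in krange C) = (lo C <= j <= lo C + (len C)%:Z).
Proof.
apply/mapP/idP => [[i]|].
  rewrite mem_iota add0n => /andP[_ hi] ->; lia.
move=> h; exists `|j - lo C|%N; last by lia.
rewrite mem_iota add0n /=; lia.
Qed.

Lemma sum_ide_r j l (F : forall k, H k l) :
  \sum_(k <- krange C) cmp (F k) (ide C j k) = F j.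
Proof.
have z k : k != j -> cmp (F k) (ide C j k) = 0.
  by move=> h; rewrite ide_off 1?eq_sym // comp0r.
case hj: (j \in krange C).
  rewrite (bigD1_seq j hj krange_uniq) /= comp_ide_r big1 ?addr0 //.
rewrite big1_seq; last by move=> k /andP[_ hk]; apply: z; apply: contraTneq hk => ->; rewrite hj.
rewrite -(comp_ide_r (F j)) bounded ?comp0r //.
move: hj; rewrite mem_krange; lia.
Qed.

Lemma sum_ide_l j l (F : forall k, H j k) :
  \sum_(k <- krange C) cmp (ide C k l) (F k) = F l.
Proof.
have z k : k != l -> cmp (ide C k l) (F k) = 0.
  by move=> h; rewrite ide_off // comp0l.
case hj: (l \in krange C).
  rewrite (bigD1_seq l hj krange_uniq) /= comp_ide_l big1 ?addr0 //.
rewrite big1_seq; last by move=> k /andP[_ hk]; apply: z; apply: contraTneq hk => ->; rewrite hj.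
rewrite -(comp_ide_l (F l)) bounded ?comp0l //.
move: hj; rewrite mem_krange; lia.
Qed.
End Aux.



Section MI.
Variable n : nat.
Local Notation mi := (mi n).

Definition msub (c : mi) (i : 'I_n) : mi := [ffun j => (c j - nat_of_bool (j == i))%N].

Lemma membed_inj N : injective (@membed n N).
Proof.
move=> b1 b2 /ffunP h; apply/ffunP => i; apply: val_inj; have := h i; by rewrite !ffunE.
Qed.

Lemma sum_uniq (V : zmodType) N (P : pred mi) (F : mi -> V) (x : mi) :
  (forall b, P b -> b = x) -> (P x -> forall i, (x i < N)%N) ->
  \sum_(b : {ffun 'I_n -> 'I_N}) (if P (membed b) then F (membed b) else 0)
  = if P x then F x else 0.
Proof.
move=> hu hr; case hx: (P x); last first.
  apply: big1 => b _; case hb: (P _) => //; move: (hb); rewrite (hu _ hb) hx //.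
have hr' := hr hx.
pose bx : {ffun 'I_n -> 'I_N} := [ffun i => Ordinal (hr' i)].
have ebx : membed bx = x by apply/ffunP => i; rewrite !ffunE.
rewrite (bigD1 bx) //= ebx hx big1 ?addr0 // => b hb.
case hP: (P _) => //; move: hb; rewrite -(membed_inj (etrans (hu _ hP) (esym ebx))) eqxx //.
Qed.

Lemma msz_madd1 (a : mi) i : msz (madd a (munit i)) = (msz a).+1.
Proof.
rewrite /msz; under eq_bigr do rewrite !ffunE.
have h1 : (\sum_(j < n) nat_of_bool (j == i) = 1)%N.
  by rewrite (bigD1 i) //= eqxx big1 ?addn0 // => j /negbTE ->.
by rewrite big_split /= h1 addn1.
Qed.

Lemma le_msz (a : mi) i : (a i <= msz a)%N.
Proof. by rewrite /msz (bigD1 i) //= leq_addr. Qed.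

Lemma madd1_neq (a : mi) i : (a == madd a (munit i)) = false.
Proof.
apply/negbTE/eqP => /ffunP /(_ i); rewrite !ffunE eqxx /= addn1 => /eqP; by rewrite eqn_leq ltnn andbF.
Qed.
End MI.



Lemma ye_hom (R : comRingType) (n : nat) (w : {perm 'I_n}) (M : amod R w) :
  yhom (ye M) (-2) 4.
Proof.
move=> j k a b; rewrite /ye; case: (eqVneq a b) => [<-|nab].
  rewrite big1 ?addr0; last by move=> i _; rewrite madd1_neq.
  have [h1 h2] := uC_hom M j k.
  split; first by move=> h; apply: h1; lia.
  by have -> : 4 - 2 * (msz a)%:Z + 2 * (msz a)%:Z = 4 by ring.
rewrite add0r; split.
  move=> h; apply: big1 => i _; case: eqP => // eb.
  rewrite ide_off ?scaler0 ?mul0rn //.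
  by move: h; rewrite eb msz_madd1; lia.
apply: qdeg_sum => i _; case: eqP => eb; last exact: qdeg0.
apply: qdegMn; rewrite eb msz_madd1.
have -> : 4 - 2 * (msz a).+1%:Z + 2 * (msz a)%:Z = 0 + 2 by lia.
rewrite scalerDl; apply: qdegD; apply: qdegX; exact: qdeg_ide.
Qed.



Lemma ifA (V : zmodType) (p q : bool) (x : V) :
  (if p then (if q then x else 0) else 0) = if p && q then x else 0.
Proof. by case: p. Qed.
Lemma if_sum (V : zmodType) I (r : seq I) (p : bool) (F : I -> V) :
  (if p then \sum_(i <- r) F i else 0) = \sum_(i <- r) (if p then F i else 0).
Proof. by case: p => //; rewrite big1. Qed.

Lemma rearr (V : zmodType) (x1 x2 x3 x4 y1 y2 y3 y4 : V) :
  (x1 + x2 + x3 + x4) - (y1 + y2 + y3 + y4) = (x1 - y1) + (x2 - y3) + (x3 - y2) + (x4 - y4).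
Proof.
rewrite (addrAC y1 y2 y3) !opprD addrACA; congr (_ + _).
rewrite addrACA; congr (_ + _).
by rewrite addrACA.
Qed.

Lemma mm n (c : mi n) i : (0 < c i)%N -> madd (msub c i) (munit i) = c.
Proof. move=> h; apply/ffunP => x; rewrite !ffunE; case: (eqVneq x i) => [->|] /=; lia. Qed.

Lemma cond_neq n (a c : mi n) i i' : i != i' ->
  ((a == madd (msub c i') (munit i)) && (c == madd (msub c i') (munit i'))) =
  (madd c (munit i) == madd a (munit i')).
Proof.
move=> nii; have nii' : (i' == i) = false by rewrite eq_sym (negbTE nii).
apply/idP/idP.
  move=> /andP[/eqP-> /eqP hc]; rewrite {1}hc.
  by apply/eqP/ffunP => y; rewrite !ffunE addnAC.
move=> /eqP /ffunP h.
have hci : (0 < c i')%N.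
  by have := h i'; rewrite !ffunE eqxx nii' /= addn0 addn1 => ->.
rewrite (mm hci) eqxx andbT; apply/eqP/ffunP => y; have := h y; rewrite !ffunE.
case: (eqVneq y i') => [->|ne'] /=.
  rewrite nii' /=; set u := c i'; set v := a i'; lia.
case: (y == i) => /=; set u := c y; set v := a y; lia.
Qed.

Section Main.
Variables (R : comRingType) (n : nat) (w : {perm 'I_n}) (M : amod R w).
Local Notation C := (cx_of M).
Local Notation X i := (xv R i + xv' R (w i)).
Local Notation cmp := (@Defs.comp _ _ C _ _ _).
Variables (j l : int) (a c : mi n).

Lemma DE_pt k (b : mi n) :
 cmp (yD M k l a b) (ye M j k b c) =
   (if (a == b) && (b == c) then cmp (dC M k l) (uC M j k) else 0)
 + \sum_i (if (a == b) && (c == madd b (munit i)) then cmp (dC M k l) ((X i *: ide C j k) *+ c i) else 0)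
 + \sum_i (if (a == madd b (munit i)) && (b == c) then cmp (xiC M i k l) (uC M j k) else 0)
 + \sum_i \sum_i' (if (a == madd b (munit i)) && (c == madd b (munit i')) then cmp (xiC M i k l) ((X i' *: ide C j k) *+ c i') else 0).
Proof.
rewrite /yD /ye compDl !compDr comp_ifl comp_ifr ifA comp_ifl comp_sumr if_sum comp_suml.
rewrite comp_suml -!addrA; congr (_ + (_ + (_ + _))).
- by apply: eq_bigr => i _; rewrite comp_ifr ifA.
- by apply: eq_bigr => i _; rewrite comp_ifl comp_ifr ifA.
- apply: eq_bigr => i _; rewrite comp_ifl comp_sumr if_sum.
  by apply: eq_bigr => i' _; rewrite comp_ifr ifA.
Qed.

Lemma ED_pt k (b : mi n) :
 cmp (ye M k l a b) (yD M j k b c) =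
   (if (a == b) && (b == c) then cmp (uC M k l) (dC M j k) else 0)
 + \sum_i (if (a == b) && (b == madd c (munit i)) then cmp (uC M k l) (xiC M i j k) else 0)
 + \sum_i' (if (b == madd a (munit i')) && (b == c) then cmp ((X i' *: ide C k l) *+ b i') (dC M j k) else 0)
 + \sum_i' \sum_i (if (b == madd a (munit i')) && (b == madd c (munit i)) then cmp ((X i' *: ide C k l) *+ b i') (xiC M i j k) else 0).
Proof.
rewrite /yD /ye compDl !compDr comp_ifl comp_ifr ifA comp_ifl comp_sumr if_sum comp_suml.
rewrite comp_suml -!addrA; congr (_ + (_ + (_ + _))).
- by apply: eq_bigr => i _; rewrite comp_ifr ifA.
- by apply: eq_bigr => i _; rewrite comp_ifl comp_ifr ifA.
- apply: eq_bigr => i _; rewrite comp_ifl comp_sumr if_sum.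
  by apply: eq_bigr => i' _; rewrite comp_ifr ifA.
Qed.

Lemma blem (m : int) (x : mi n) : (forall i, x i <= c i)%N -> forall i, (x i < ybound C m c)%N.
Proof. move=> h i; rewrite /ybound ltnS; apply: leq_trans (h i) _; apply: leq_trans (le_msz c i) _; exact: leq_addr. Qed.

Lemma blem1 i0 i : ((madd c (munit i0)) i < ybound C 1 c)%N.
Proof.
rewrite /ybound !ffunE ltnS; have := le_msz c i.
have -> : (len C)%:Z + 1 = (len C + 1)%N%:Z by rewrite PoszD.
rewrite absz_nat; case: (i == i0) => /=; lia.
Qed.

Lemma msub_madd (b : mi n) i : msub (madd b (munit i)) i = b.
Proof. by apply/ffunP => x; rewrite !ffunE addnK. Qed.

Lemma DE_k k :
 \sum_(b : {ffun 'I_n -> 'I_(ybound C (-2) c)}) cmp (yD M k l a (membed b)) (ye M j k (membed b) c) =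
   (if a == c then cmp (dC M k l) (uC M j k) else 0)
 + \sum_i (if c == madd a (munit i) then cmp (dC M k l) ((X i *: ide C j k) *+ c i) else 0)
 + \sum_i (if a == madd c (munit i) then cmp (xiC M i k l) (uC M j k) else 0)
 + \sum_i \sum_i' (if (a == madd (msub c i') (munit i)) && (c == madd (msub c i') (munit i'))
        then cmp (xiC M i k l) ((X i' *: ide C j k) *+ c i') else 0).
Proof.
under eq_bigr do rewrite DE_pt.
rewrite !big_split /=; congr (_ + _ + _ + _).
- have E := @sum_uniq _ _ (ybound C (-2) c) (fun b => (a == b) && (b == c)) (fun _ => cmp (dC M k l) (uC M j k)) c; cbv beta in E; rewrite E.
  + by rewrite eqxx andbT.
  + by move=> b /andP[_ /eqP].
  + by move=> _; apply: blem.
- rewrite exchange_big /=; apply: eq_bigr => i _.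
  have E := @sum_uniq _ _ (ybound C (-2) c) (fun b => (a == b) && (c == madd b (munit i))) (fun _ => cmp (dC M k l) ((X i *: ide C j k) *+ c i)) a; cbv beta in E; rewrite E.
  + by rewrite eqxx.
  + by move=> b /andP[/eqP].
  + move=> /andP[_ /eqP hc]; apply: blem => x; rewrite hc !ffunE; exact: leq_addr.
- rewrite exchange_big /=; apply: eq_bigr => i _.
  have E := @sum_uniq _ _ (ybound C (-2) c) (fun b => (a == madd b (munit i)) && (b == c)) (fun _ => cmp (xiC M i k l) (uC M j k)) c; cbv beta in E; rewrite E.
  + by rewrite eqxx andbT.
  + by move=> b /andP[_ /eqP].
  + by move=> _; apply: blem.
- rewrite exchange_big /=; apply: eq_bigr => i _.
  rewrite exchange_big /=; apply: eq_bigr => i' _.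
  have E := @sum_uniq _ _ (ybound C (-2) c) (fun b => (a == madd b (munit i)) && (c == madd b (munit i'))) (fun _ => cmp (xiC M i k l) ((X i' *: ide C j k) *+ c i')) (msub c i'); cbv beta in E; rewrite E //.
  + by move=> b /andP[_ /eqP ->]; rewrite msub_madd.
  + move=> _; apply: blem => x; rewrite !ffunE; exact: leq_subr.
Qed.

Lemma ED_k k :
 \sum_(b : {ffun 'I_n -> 'I_(ybound C 1 c)}) cmp (ye M k l a (membed b)) (yD M j k (membed b) c) =
   (if a == c then cmp (uC M k l) (dC M j k) else 0)
 + \sum_i (if a == madd c (munit i) then cmp (uC M k l) (xiC M i j k) else 0)
 + \sum_i' (if c == madd a (munit i') then cmp ((X i' *: ide C k l) *+ c i') (dC M j k) else 0)
 + \sum_i' \sum_i (if madd c (munit i) == madd a (munit i') then cmp ((X i' *: ide C k l) *+ (madd c (munit i)) i') (xiC M i j k) else 0).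
Proof.
under eq_bigr do rewrite ED_pt.
rewrite !big_split /=; congr (_ + _ + _ + _).
- have E := @sum_uniq _ _ (ybound C 1 c) (fun b => (a == b) && (b == c)) (fun _ => cmp (uC M k l) (dC M j k)) c; cbv beta in E; rewrite E.
  + by rewrite eqxx andbT.
  + by move=> b /andP[_ /eqP].
  + by move=> _; apply: blem.
- rewrite exchange_big /=; apply: eq_bigr => i _.
  have E := @sum_uniq _ _ (ybound C 1 c) (fun b => (a == b) && (b == madd c (munit i))) (fun _ => cmp (uC M k l) (xiC M i j k)) (madd c (munit i)); cbv beta in E; rewrite E.
  + by rewrite eqxx andbT.
  + by move=> b /andP[_ /eqP].
  + by move=> _; apply: blem1.
- rewrite exchange_big /=; apply: eq_bigr => i _.
  have E := @sum_uniq _ _ (ybound C 1 c) (fun b => (b == madd a (munit i)) && (b == c)) (fun b => cmp ((X i *: ide C k l) *+ b i) (dC M j k)) c; cbv beta in E; rewrite E.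
  + by rewrite eqxx andbT eq_sym.
  + by move=> b /andP[_ /eqP].
  + by move=> _; apply: blem.
- rewrite exchange_big /=; apply: eq_bigr => i' _.
  rewrite exchange_big /=; apply: eq_bigr => i _.
  have E := @sum_uniq _ _ (ybound C 1 c) (fun b => (b == madd a (munit i')) && (b == madd c (munit i))) (fun b => cmp ((X i' *: ide C k l) *+ b i') (xiC M i j k)) (madd c (munit i)); cbv beta in E; rewrite E.
  + by rewrite eqxx andbT eq_sym.
  + by move=> b /andP[_ /eqP].
  + by move=> _; apply: blem1.
Qed.

Lemma DE_tot :
 ycomp (-2) (yD M) (ye M) j l a c =
   (if a == c then ccomp (dC M) (uC M) j l else 0)
 + \sum_i (if c == madd a (munit i) then (X i *: dC M j l) *+ c i else 0)
 + \sum_i (if a == madd c (munit i) then ccomp (xiC M i) (uC M) j l else 0)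
 + \sum_i \sum_i' (if (a == madd (msub c i') (munit i)) && (c == madd (msub c i') (munit i'))
        then (X i' *: xiC M i j l) *+ c i' else 0).
Proof.
rewrite /ycomp; under eq_bigr do rewrite DE_k.
rewrite !big_split /=; congr (_ + _ + _ + _).
- by rewrite -if_sum.
- rewrite exchange_big /=; apply: eq_bigr => i _; rewrite -if_sum.
  under eq_bigr do rewrite compMnr compZr.
  by rewrite sumrMnl -scaler_sumr sum_ide_r.
- by rewrite exchange_big /=; apply: eq_bigr => i _; rewrite -if_sum.
- rewrite exchange_big /=; apply: eq_bigr => i _.
  rewrite exchange_big /=; apply: eq_bigr => i' _; rewrite -if_sum.
  under eq_bigr do rewrite compMnr compZr.
  by rewrite sumrMnl -scaler_sumr sum_ide_r.
Qed.

Lemma ED_tot :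
 ycomp 1 (ye M) (yD M) j l a c =
   (if a == c then ccomp (uC M) (dC M) j l else 0)
 + \sum_i (if a == madd c (munit i) then ccomp (uC M) (xiC M i) j l else 0)
 + \sum_i' (if c == madd a (munit i') then (X i' *: dC M j l) *+ c i' else 0)
 + \sum_i' \sum_i (if madd c (munit i) == madd a (munit i') then (X i' *: xiC M i j l) *+ (madd c (munit i)) i' else 0).
Proof.
rewrite /ycomp; under eq_bigr do rewrite ED_k.
rewrite !big_split /=; congr (_ + _ + _ + _).
- by rewrite -if_sum.
- by rewrite exchange_big /=; apply: eq_bigr => i _; rewrite -if_sum.
- rewrite exchange_big /=; apply: eq_bigr => i _; rewrite -if_sum.
  under eq_bigr do rewrite compMnl compZl.
  by rewrite sumrMnl -scaler_sumr sum_ide_l.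
- rewrite exchange_big /=; apply: eq_bigr => i _.
  rewrite exchange_big /=; apply: eq_bigr => i' _; rewrite -if_sum.
  under eq_bigr do rewrite compMnl compZl.
  by rewrite sumrMnl -scaler_sumr sum_ide_l.
Qed.

Lemma diagt (V : zmodType) (v : V) i :
 (if (a == madd (msub c i) (munit i)) && (c == madd (msub c i) (munit i)) then v *+ c i else 0)
 - (if madd c (munit i) == madd a (munit i) then v *+ (madd c (munit i)) i else 0)
 = if a == c then - v else 0.
Proof.
case: (eqVneq a c) => [<-|nac].
  rewrite eqxx !ffunE eqxx addn1 mulrS.
  case: (posnP (a i)) => [z|p].
    by rewrite z mulr0n if_same sub0r addr0.
  by rewrite (mm p) eqxx /= opprD addrCA subrr addr0.
have -> : (madd c (munit i) == madd a (munit i)) = false.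
  apply/negbTE; apply: (contra (fun H => _)) nac => /eqP/ffunP h.
  by apply/eqP/ffunP => y; have := h y; rewrite !ffunE => /addIn.
case: andP => [[/eqP ha /eqP hc]|_]; last by rewrite subrr.
by rewrite ha -hc eqxx in nac.
Qed.

Lemma D4_diff :
 \sum_i \sum_i' (if (a == madd (msub c i') (munit i)) && (c == madd (msub c i') (munit i'))
        then (X i' *: xiC M i j l) *+ c i' else 0)
 - \sum_i' \sum_i (if madd c (munit i) == madd a (munit i') then (X i' *: xiC M i j l) *+ (madd c (munit i)) i' else 0)
 = - (if a == c then \sum_i X i *: xiC M i j l else 0).
Proof.
rewrite [Y in _ - Y]exchange_big /= -sumrB.
have -> : - (if a == c then \sum_i X i *: xiC M i j l else 0) =
   \sum_i (if a == c then - (X i *: xiC M i j l) else 0).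
  by case: (a == c); [rewrite sumrN | rewrite oppr0 big1].
apply: eq_bigr => i _; rewrite -sumrB (bigD1 i) //= diagt big1 ?addr0 // => i' ne.
by rewrite cond_neq 1?eq_sym // !ffunE (negbTE ne) addn0 subrr.
Qed.

Lemma main_eq : ysupcomm 1 (-2) (yD M) (ye M) j l a c = 0.
Proof.
rewrite /ysupcomm.
have -> : (-1) ^+ (absz (1 * -2)) = 1 :> {mpoly R[n + n]} by rewrite /= expr2 mulrNN mulr1.
rewrite scale1r DE_tot ED_tot rearr.
rewrite D4_diff subrr addr0.
under eq_bigr do rewrite xiC_u.
rewrite subrr addr0.
have -> : (if a == c then ccomp (dC M) (uC M) j l else 0) - (if a == c then ccomp (uC M) (dC M) j l else 0)
  = if a == c then \sum_i X i *: xiC M i j l else 0.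
  by case: (a == c); rewrite ?d_u ?subrr.
by rewrite subrr.
Qed.

End Main.


Unset Implicit Arguments.

Theorem proposition2p9 (R : comRingType) (n : nat) (w : {perm 'I_n})
    (M : amod R w) :
  yhom (ye M) (-2) 4 /\
  (forall (j k : int) (a b : mi n), ysupcomm 1 (-2) (yD M) (ye M) j k a b = 0).
Proof.
split; first exact: ye_hom.
move=> j k a b; exact: main_eq.
Qed.
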